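(* Let $R$ be a finitely stable domain that does not have finite character, let $x\in R$ be nonzero and let $\{I_\alpha\}$ be an infinite family of pairwise comaximal finitely generated ideals of $R$ each containing $x$. Set $E_\alpha=(I_\alpha:I_\alpha)$ and $E=\sum_\alpha E_\alpha$. Then $E$ is a fractional overring of $R$, and $\{I_\alpha E\}$ is an infinite family of pairwise comaximal proper invertible ideals of $E$, each containing $x$.
   Context: Let $R$ be an integral domain with quotient field $K\neq R$. For a nonzero ideal $I$, $(I:I)=\{y\in K: yI\subseteq I\}$. An overring of $R$ is a domain $D$ with $R\subseteq D\subseteq K$; it is fractional if $dD\subseteq R$ for some nonzero $d\in R$. A nonzero ideal $I$ is stable if it is invertible as an ideal of $(I:I)$; $R$ is finitely stable if every nonzero finitely generated ideal is stable. $R$ has finite character if every nonzero element of $R$ lies in only finitely many maximal ideals. Ideals $A,B$ of a ring $S$ are comaximal if $A+B=S$. *)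

(* Defs.v *)
From HB Require Import structures.
From mathcomp Require Import all_boot all_order all_algebra.
Set Implicit Arguments. Unset Strict Implicit. Unset Printing Implicit Defensive.
Import GRing.Theory.
Local Open Scope ring_scope.

Section Defs.
Variable K : fieldType.
Definition kset := K -> Prop.

Definition seteq (A B : kset) : Prop := forall z, A z <-> B z.
Definition subset (A B : kset) : Prop := forall z, A z -> B z.

(* S is a subring of K (hence a domain, with quotient field inside K) *)
Definition is_subring (S : kset) : Prop :=
  [/\ S 0, S 1, (forall a b, S a -> S b -> S (a - b)) &
      (forall a b, S a -> S b -> S (a * b))].

Definition quot_field_of (S : kset) : Prop :=
  forall z, exists a b, [/\ S a, S b, b != 0 & z = a / b].

Definition ideal_of (D I : kset) : Prop :=
  [/\ subset I D, I 0, (forall a b, I a -> I b -> I (a + b)) &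
      (forall d a, D d -> I a -> I (d * a))].

Definition nonzero_set (I : kset) : Prop := exists a, I a /\ a != 0.

Definition gen_ideal (D : kset) n (g : 'I_n -> K) : kset :=
  fun z => exists d : 'I_n -> K, (forall i, D (d i)) /\ z = \sum_(i < n) d i * g i.

Definition fg_ideal (D I : kset) : Prop :=
  ideal_of D I /\ exists n (g : 'I_n -> K), (forall i, D (g i)) /\ seteq I (gen_ideal D g).

Definition colon (A B : kset) : kset := fun y => forall b, B b -> A (y * b).

Definition prodset (A B : kset) : kset :=
  fun z => exists n (a b : 'I_n -> K),
    (forall i, A (a i) /\ B (b i)) /\ z = \sum_(i < n) a i * b i.

Definition sumfam (A : Type) (F : A -> kset) : kset :=
  fun z => exists n (al : 'I_n -> A) (e : 'I_n -> K),
    (forall i, F (al i) (e i)) /\ z = \sum_(i < n) e i.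

Definition invertible_ideal (D I : kset) : Prop :=
  ideal_of D I /\ seteq (prodset I (colon D I)) D.

Definition stable_ideal (R I : kset) : Prop :=
  ideal_of R I /\ nonzero_set I /\ invertible_ideal (colon I I) I.

Definition finitely_stable (R : kset) : Prop :=
  forall I, fg_ideal R I -> nonzero_set I -> stable_ideal R I.

Definition maximal_ideal (R M : kset) : Prop :=
  [/\ ideal_of R M, ~ M 1 &
      forall J, ideal_of R J -> subset M J -> J 1 \/ seteq J M].

Definition finite_character (R : kset) : Prop :=
  forall r, R r -> r != 0 ->
    exists n (Ms : 'I_n -> kset),
      forall M, maximal_ideal R M -> M r -> exists i, seteq M (Ms i).

Definition comaximal (S A B : kset) : Prop :=
  seteq (fun z => exists a b, [/\ A a, B b & z = a + b]) S.

Definition fractional_overring (R D : kset) : Prop :=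
  [/\ is_subring D, subset R D &
      exists d, [/\ R d, d != 0 & forall e, D e -> R (d * e)]].

Definition infinite_type (A : Type) : Prop :=
  exists f : nat -> A, forall m n, f m = f n -> m = n.
End Defs.

(* Main.v *)
Require Import Defs.
From HB Require Import structures.
From mathcomp Require Import all_boot all_order all_algebra ring.
From Stdlib Require Import Classical.
Set Implicit Arguments. Unset Strict Implicit.
Import GRing.Theory.
Local Open Scope ring_scope.

Section Gen.
Variable K : fieldType.

Definition catf (T : Type) n1 n2 (f1 : 'I_n1 -> T) (f2 : 'I_n2 -> T) (i : 'I_(n1 + n2)) : T :=
  match split i with inl j => f1 j | inr k => f2 k end.

Lemma catf_l T n1 n2 (f1 : 'I_n1 -> T) (f2 : 'I_n2 -> T) i : catf f1 f2 (lshift n2 i) = f1 i.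
Proof. by rewrite /catf (unsplitK (inl i)). Qed.
Lemma catf_r T n1 n2 (f1 : 'I_n1 -> T) (f2 : 'I_n2 -> T) i : catf f1 f2 (rshift n1 i) = f2 i.
Proof. by rewrite /catf (unsplitK (inr i)). Qed.

Lemma catfP T n1 n2 (f1 : 'I_n1 -> T) (f2 : 'I_n2 -> T) (P : T -> Prop) :
  (forall i, P (f1 i)) -> (forall i, P (f2 i)) -> forall i, P (catf f1 f2 i).
Proof. by move=> H1 H2 i; rewrite /catf; case: split. Qed.

Lemma catfP2 T U n1 n2 (f1 : 'I_n1 -> T) (f2 : 'I_n2 -> T) (g1 : 'I_n1 -> U) (g2 : 'I_n2 -> U)
   (P : T -> U -> Prop) :
  (forall i, P (f1 i) (g1 i)) -> (forall i, P (f2 i) (g2 i)) ->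
  forall i, P (catf f1 f2 i) (catf g1 g2 i).
Proof. by move=> H1 H2 i; rewrite /catf; case: split. Qed.

Lemma sum_catf n1 n2 (F : 'I_(n1 + n2) -> K) :
  \sum_(i < n1 + n2) F i = \sum_(i < n1) F (lshift n2 i) + \sum_(i < n2) F (rshift n1 i).
Proof. by rewrite big_split_ord. Qed.

Lemma sumfam0 A (F : A -> kset K) : sumfam F 0.
Proof.
have al : 'I_0 -> A by case.
exists 0%N, al, (fun _ => 0); split; first by case.
by rewrite big_ord0.
Qed.

Lemma sumfam_in A (F : A -> kset K) a z : F a z -> sumfam F z.
Proof.
move=> H; exists 1%N, (fun _ => a), (fun _ => z); split => //.
by rewrite big_ord1.
Qed.

Lemma sumfamD A (F : A -> kset K) z1 z2 : sumfam F z1 -> sumfam F z2 -> sumfam F (z1 + z2).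
Proof.
move=> [n1 [a1 [e1 [H1 ->]]]] [n2 [a2 [e2 [H2 ->]]]].
exists (n1 + n2)%N, (catf a1 a2), (catf e1 e2); split.
  exact: (catfP2 (P := fun a e => F a e)).
by rewrite sum_catf; congr (_ + _); apply: eq_bigr => i _; rewrite ?catf_l ?catf_r.
Qed.

Lemma sumfam_ind A (F : A -> kset K) (P : K -> Prop) :
  P 0 -> (forall a b, P a -> P b -> P (a + b)) -> (forall a z, F a z -> P z) ->
  forall z, sumfam F z -> P z.
Proof.
move=> P0 PD PF z [n [al [e [He ->]]]].
elim/big_ind: _ => //; move=> i _; exact: PF (He i).
Qed.

Lemma prodset0 (X Y : kset K) : prodset X Y 0.
Proof.
exists 0%N, (fun _ => 0), (fun _ => 0); split; first by case.
by rewrite big_ord0.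
Qed.

Lemma prodset_in (X Y : kset K) a b : X a -> Y b -> prodset X Y (a * b).
Proof.
move=> Ha Hb; exists 1%N, (fun _ => a), (fun _ => b); split => //.
by rewrite big_ord1.
Qed.

Lemma prodsetD (X Y : kset K) z1 z2 : prodset X Y z1 -> prodset X Y z2 -> prodset X Y (z1 + z2).
Proof.
move=> [n1 [a1 [e1 [H1 ->]]]] [n2 [a2 [e2 [H2 ->]]]].
exists (n1 + n2)%N, (catf a1 a2), (catf e1 e2); split.
  exact: (catfP2 (P := fun a e => X a /\ Y e)).
by rewrite sum_catf; congr (_ + _); apply: eq_bigr => i _; rewrite ?catf_l ?catf_r.
Qed.

Lemma prodset_ind (X Y : kset K) (P : K -> Prop) :
  P 0 -> (forall a b, P a -> P b -> P (a + b)) -> (forall a b, X a -> Y b -> P (a * b)) ->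
  forall z, prodset X Y z -> P z.
Proof.
move=> P0 PD PF z [n [a [b [He ->]]]].
elim/big_ind: _ => //; move=> i _; case: (He i) => ??; exact: PF.
Qed.

End Gen.

Section Main.
Variable K : fieldType.
Variable R : kset K.
Variable A : Type.
Variable I : A -> kset K.
Hypothesis HR : is_subring R.
Hypothesis HI : forall a, ideal_of R (I a).
Hypothesis Hcom : forall a b, a <> b -> comaximal R (I a) (I b).

Let Ec a := colon (I a) (I a).
Let E := sumfam Ec.

Lemma R0 : R 0. Proof. by case: HR. Qed.
Lemma R1 : R 1. Proof. by case: HR. Qed.
Lemma RB a b : R a -> R b -> R (a - b). Proof. by case: HR => _ _ H _; apply: H. Qed.
Lemma RM a b : R a -> R b -> R (a * b). Proof. by case: HR => _ _ _ H; apply: H. Qed.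
Lemma RN a : R a -> R (- a). Proof. by move=> Ha; rewrite -sub0r; apply: RB => //; apply: R0. Qed.
Lemma RD a b : R a -> R b -> R (a + b).
Proof. by move=> Ha Hb; rewrite -[b]opprK; apply: RB => //; apply: RN. Qed.

Lemma IR a z : I a z -> R z. Proof. by case: (HI a) => H _ _ _; apply: H. Qed.
Lemma I0 a : I a 0. Proof. by case: (HI a). Qed.
Lemma ID a y z : I a y -> I a z -> I a (y + z). Proof. by case: (HI a) => _ _ H _; apply: H. Qed.
Lemma IMl a d z : R d -> I a z -> I a (d * z). Proof. by case: (HI a) => _ _ _ H; apply: H. Qed.
Lemma IMr a d z : R d -> I a z -> I a (z * d). Proof. by rewrite mulrC; apply: IMl. Qed.
Lemma IN a z : I a z -> I a (- z).
Proof. move=> H; rewrite -mulN1r; apply: IMl => //; apply: RN; apply: R1. Qed.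
Lemma IB a y z : I a y -> I a z -> I a (y - z). Proof. by move=> ??; apply: ID => //; apply: IN. Qed.

Lemma EcR a r : R r -> Ec a r. Proof. by move=> Hr b Hb; apply: IMl. Qed.
Lemma EcI a y i : Ec a y -> I a i -> I a (y * i). Proof. by move=> H Hi; apply: H. Qed.
Lemma EcD a y z : Ec a y -> Ec a z -> Ec a (y + z).
Proof. by move=> Hy Hz b Hb; rewrite mulrDl; apply: ID; [apply: Hy | apply: Hz]. Qed.
Lemma EcM a y z : Ec a y -> Ec a z -> Ec a (y * z).
Proof. by move=> Hy Hz b Hb; rewrite -mulrA; apply: Hy; apply: Hz. Qed.
Lemma EcN a y : Ec a y -> Ec a (- y).
Proof. by move=> Hy b Hb; rewrite mulNr; apply: IN; apply: Hy. Qed.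

Lemma comax a b : a <> b -> exists u v, [/\ I a u, I b v & 1 = u + v].
Proof.
move=> /Hcom H; case: (H 1) => _ /(_ R1) [u [v [Hu Hv ->]]].
by exists u, v.
Qed.

Lemma E_Ec a z : Ec a z -> E z. Proof. exact: sumfam_in. Qed.
Lemma E0 : E 0. Proof. exact: sumfam0. Qed.
Lemma ED y z : E y -> E z -> E (y + z). Proof. exact: sumfamD. Qed.
Lemma EN y : E y -> E (- y).
Proof.
move: y; apply: (@sumfam_ind _ _ _ (fun y => E (- y))); first by rewrite oppr0; apply: E0.
  by move=> a b ??; rewrite opprD; apply: ED.
by move=> a z Hz; apply: (@E_Ec a); apply: EcN.
Qed.

Lemma EM_base a b y z : Ec a y -> Ec b z -> E (y * z).
Proof.
move=> Hy Hz; case: (classic (a = b)) => [Heq|Hab].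
  subst b; by apply: (@E_Ec a); apply: EcM.
case: (comax Hab) => u [v [Hu Hv Huv]].
have -> : y * z = z * (y * u) + y * (z * v).
  by rewrite -[LHS]mulr1 Huv; ring.
apply: ED.
  apply: (@E_Ec b); apply: EcM => //; apply: EcR; apply: (@IR a); exact: EcI.
apply: (@E_Ec a); apply: EcM => //; apply: EcR; apply: (@IR b); exact: EcI.
Qed.

Lemma EM y z : E y -> E z -> E (y * z).
Proof.
move=> Hy Hz; move: y Hy; apply: (@sumfam_ind _ _ _ (fun y => E (y * z))).
- by rewrite mul0r; apply: E0.
- by move=> ????; rewrite mulrDl; apply: ED.
move=> a y Hy; move: z Hz; apply: (@sumfam_ind _ _ _ (fun z => E (y * z))).
- by rewrite mulr0; apply: E0.
- by move=> ????; rewrite mulrDr; apply: ED.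
by move=> b z Hz; apply: EM_base Hy Hz.
Qed.

Lemma ER (a0 : A) r : R r -> E r.
Proof. by move=> Hr; apply: (@E_Ec a0); apply: EcR. Qed.

Lemma keyE a z : E z -> exists u, I a u /\ Ec a ((1 - u) * z).
Proof.
move: z; apply: (@sumfam_ind _ _ _ (fun z => exists u, I a u /\ Ec a ((1 - u) * z))).
- by exists 0; split; [apply: I0 | rewrite mulr0; apply: EcR; apply: R0].
- move=> y z [u1 [H1 Hy]] [u2 [H2 Hz]].
  exists (u1 + u2 - u1 * u2); split.
    by apply: IB; [apply: ID | apply: IMl => //; apply: IR H1].
  have -> : (1 - (u1 + u2 - u1 * u2)) * (y + z)
     = (1 - u2) * ((1 - u1) * y) + (1 - u1) * ((1 - u2) * z) by ring.
  apply: EcD; apply: EcM => //; apply: EcR; apply: RB; try apply: R1;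
    by apply: IR; eassumption.
move=> b z Hz; case: (classic (b = a)) => [Heq|Hab].
  subst b; by exists 0; rewrite subr0 mul1r; split => //; apply: I0.
case: (comax (nesym Hab)) => u [v [Hu Hv Huv]].
exists u; split => //.
have -> : 1 - u = v by rewrite Huv; ring.
apply: EcR; apply: (@IR b); rewrite mulrC; exact: EcI.
Qed.

Lemma keyP a z : prodset (I a) E z -> exists u, I a u /\ I a ((1 - u) * z).
Proof.
move: z; apply: (@prodset_ind _ _ _ (fun z => exists u, I a u /\ I a ((1 - u) * z))).
- by exists 0; split; [apply: I0 | rewrite mulr0; apply: I0].
- move=> y z [u1 [H1 Hy]] [u2 [H2 Hz]].
  exists (u1 + u2 - u1 * u2); split.
    by apply: IB; [apply: ID | apply: IMl => //; apply: IR H1].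
  have -> : (1 - (u1 + u2 - u1 * u2)) * (y + z)
     = (1 - u2) * ((1 - u1) * y) + (1 - u1) * ((1 - u2) * z) by ring.
  apply: ID; apply: IMl => //; apply: RB; try apply: R1;
    by apply: IR; eassumption.
move=> i e Hi He; case: (keyE a He) => u [Hu He'].
exists u; split => //.
have -> : (1 - u) * (i * e) = ((1 - u) * e) * i by ring.
exact: EcI.
Qed.

Lemma proper a : ~ I a 1 -> ~ prodset (I a) E 1.
Proof.
move=> H1 /keyP [u [Hu H]]; apply: H1.
have -> : 1 = (1 - u) * 1 + u by ring.
by apply: ID.
Qed.

Lemma PE_E (a0 : A) a z : prodset (I a) E z -> E z.
Proof.
move: z; apply: (@prodset_ind _ _ _ (fun z => E z)).
- exact: E0.
- by move=> ????; apply: ED.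
by move=> i e Hi He; apply: EM => //; apply: (ER a0); apply: IR Hi.
Qed.

Lemma PE_mul a d z : E d -> prodset (I a) E z -> prodset (I a) E (d * z).
Proof.
move=> Hd; move: z; apply: (@prodset_ind _ _ _ (fun z => prodset (I a) E (d * z))).
- by rewrite mulr0; apply: prodset0.
- by move=> ????; rewrite mulrDr; apply: prodsetD.
move=> i e Hi He; rewrite mulrCA; apply: prodset_in => //; exact: EM.
Qed.

Lemma PE_ideal (a0 : A) a : ideal_of E (prodset (I a) E).
Proof.
split.
- by move=> z; apply: PE_E.
- exact: prodset0.
- by move=> ???; apply: prodsetD.
by move=> d z Hd Hz; apply: PE_mul.
Qed.

Lemma PE_inv (a0 : A) a : prodset (I a) (colon (Ec a) (I a)) 1 ->
  invertible_ideal E (prodset (I a) E).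
Proof.
move=> H1; split; first exact: PE_ideal.
move=> z; split.
  move: z; apply: (@prodset_ind _ _ _ (fun z => E z)).
  - exact: E0.
  - by move=> ????; apply: ED.
  by move=> p q Hp Hq; rewrite mulrC; apply: Hq.
move=> Hz; rewrite -[z]mul1r; move: 1 H1.
apply: (@prodset_ind _ _ _ (fun w => prodset (prodset (I a) E) (colon E (prodset (I a) E)) (w * z))).
- by rewrite mul0r; apply: prodset0.
- by move=> ????; rewrite mulrDl; apply: prodsetD.
move=> c y Hc Hy.
have -> : c * y * z = (c * 1) * (y * z) by ring.
apply: prodset_in.
  apply: prodset_in => //; apply: (ER a0); exact: R1.
move=> b; move: b; apply: (@prodset_ind _ _ _ (fun b => E (y * z * b))).
- by rewrite mulr0; apply: E0.
- by move=> ????; rewrite mulrDr; apply: ED.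
move=> i e Hi He.
have -> : y * z * (i * e) = (y * i) * (z * e) by ring.
apply: EM; last exact: EM.
exact: (@E_Ec a _ (Hy i Hi)).
Qed.

Lemma PE_comax (a0 : A) a b : a <> b ->
  comaximal E (prodset (I a) E) (prodset (I b) E).
Proof.
move=> Hab; rewrite /comaximal /seteq => z /=; split.
  move=> [p [q [Hp Hq ->]]]; apply: ED; [exact: (PE_E a0 Hp) | exact: (PE_E a0 Hq)].
move=> Hz; case: (comax Hab) => u [v [Hu Hv Huv]].
exists (u * z), (v * z); split.
- exact: prodset_in.
- exact: prodset_in.
by rewrite -mulrDl -Huv mul1r.
Qed.

Lemma E_frac (a0 : A) x : R x -> x != 0 -> (forall a, I a x) -> fractional_overring R E.
Proof.
move=> Hx Hx0 HIx; split.
- split.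
  + exact: E0.
  + by apply: (ER a0); apply: R1.
  + by move=> ???? ; apply: ED => //; apply: EN.
  + by move=> ????; apply: EM.
- by move=> r; apply: ER.
exists x; split => //.
apply: (@sumfam_ind _ _ _ (fun e => R (x * e))).
- by rewrite mulr0; apply: R0.
- by move=> ????; rewrite mulrDr; apply: RD.
move=> a e He; apply: (@IR a); rewrite mulrC; apply: He; exact: HIx.
Qed.

End Main.

Theorem mainTheorem5 (K : fieldType) (R : kset K)
  (A : Type) (I : A -> kset K) (x : K) :
  is_subring R -> quot_field_of R -> (exists k, ~ R k) ->
  finitely_stable R -> ~ finite_character R ->
  R x -> x != 0 ->
  infinite_type A ->
  (forall a, fg_ideal R (I a)) ->
  (forall a, ~ I a 1) ->
  (forall a b, a <> b -> comaximal R (I a) (I b)) ->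
  (forall a, I a x) ->
  let E := sumfam (fun a => colon (I a) (I a)) in
  fractional_overring R E /\
  (forall a, invertible_ideal E (prodset (I a) E)) /\
  (forall a, ~ prodset (I a) E 1) /\
  (forall a b, a <> b -> comaximal E (prodset (I a) E) (prodset (I b) E)) /\
  (forall a, prodset (I a) E x).
Proof.
move=> HR _ _ Hfs _ Hx Hx0 [f _] Hfg HI1 Hcom HIx E.
have HI : forall a, ideal_of R (I a) by move=> a; case: (Hfg a).
have a0 := f 0%N.
split; first exact: (E_frac HR HI Hcom a0 Hx Hx0 HIx).
split.
  move=> a; apply: (PE_inv HR HI Hcom a0).
  have [_ [_ [_ Hs]]] := Hfs (I a) (Hfg a) (ex_intro _ x (conj (HIx a) Hx0)).
  case: (Hs 1) => _; apply; exact: (EcR HI (a:=a) (R1 HR)).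
split; first by move=> a; apply: (proper HR HI Hcom (HI1 a)).
split; first by move=> a b; apply: (PE_comax HR HI Hcom a0).
move=> a; rewrite -[x]mulr1; apply: prodset_in => //.
exact: (ER HI a0 (R1 HR)).
Qed.
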